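(* Let $k\ge1$, let $(T,o)$ be a valid finite rooted tree, and let $D$ be a signed incidence matrix of $T$, i.e. the real $V(T)\times U(T)$ matrix with $D_{v,u}\in\{1,-1\}$ if $vu$ is an edge of $T$ and $D_{v,u}=0$ otherwise. Let $V(T)=K\uplus J$ be a partition with $m(K,T)>0$ and let $v_0\in J$. Then there exists $\varphi\in\mathbb R^{V(T)}$ such that (i) $\varphi^TD=0$, (ii) $\varphi(v_0)=1$, and (iii) \[\sum_{v\in J}\varphi(v)^2=\frac{m(K,T)}{m(K,T)-m(K\cup\{v_0\},T)}.\]
   Context: Trees. For a finite rooted tree $(T,o)$, the height of a vertex is its distance from $o$ and the height of $T$ is the maximal height of a vertex. Vertices of even (odd) height are called even (odd); $V(T)$ and $U(T)$ denote the sets of even and odd vertices. $(T,o)$ is valid if its height is even and every odd vertex has degree exactly $k+1$ in $T$. For $K\subset V(T)$, $m(K,T)$ is the number of matchings of $T$ in which every vertex of $K\cup U(T)$ is saturated (the denominator in (iii) is positive). *)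

(* Defs.v *)
From mathcomp Require Import all_boot all_order all_algebra.
From mathcomp Require Import reals.
Set Implicit Arguments. Unset Strict Implicit. Unset Printing Implicit Defensive.
Import Order.TTheory GRing.Theory Num.Theory.

Section Trees.
Variable T : finType.
Variable e : rel T.

Definition simple_graph := symmetric e /\ irreflexive e.

Definition acyclic := forall c : seq T, uniq c -> 2 < size c -> ~~ cycle e c.

Definition is_tree := simple_graph /\ (forall x y, connect e x y) /\ acyclic.

Fixpoint ball (n : nat) (x : T) : {set T} :=
  match n with
  | 0 => [set x]
  | n'.+1 => ball n' x :|: [set y | [exists z in ball n' x, e z y]]
  end.

(* graph distance from x to y (for connected graphs): least n with y in ball n x *)
Definition dist (x y : T) : nat := find (fun n => y \in ball n x) (iota 0 #|T|).

Definition height (o v : T) : nat := dist o v.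
Definition tree_height (o : T) : nat := \max_(v : T) height o v.
Definition even_vertices (o : T) : {set T} := [set v | ~~ odd (height o v)].
Definition odd_vertices (o : T) : {set T} := [set v | odd (height o v)].

Definition degree (v : T) : nat := #|[set w | e v w]|.

Definition valid (k : nat) (o : T) :=
  ~~ odd (tree_height o) /\ forall u, u \in odd_vertices o -> degree u = k.+1.

(* A matching is represented by the symmetric set of ordered pairs (x,y)
   with xy a matching edge; each vertex has at most one partner. *)
Definition is_matching (M : {set T * T}) : bool :=
  [forall p in M, e p.1 p.2 && ((p.2, p.1) \in M)] &&
  [forall x, forall y, forall z, ((x, y) \in M) && ((x, z) \in M) ==> (y == z)].

Definition saturates (M : {set T * T}) (x : T) : bool := [exists y, (x, y) \in M].

(* m(K,T): number of matchings saturating every vertex of K ∪ U(T) *)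
Definition m_count (o : T) (K : {set T}) : nat :=
  #|[set M : {set T * T} | is_matching M &&
        [forall x in K :|: odd_vertices o, saturates M x]]|.

End Trees.

(* Main.v *)
Require Import Defs.
From mathcomp Require Import all_boot all_order all_algebra.
From mathcomp Require Import reals.
From mathcomp Require Import zify ring.
Set Implicit Arguments. Unset Strict Implicit. Unset Printing Implicit Defensive.

Section Dist.
Variable T : finType.
Variable e : rel T.
Hypothesis Hsym : symmetric e.
Hypothesis Hirr : irreflexive e.
Hypothesis Hconn : forall x y, connect e x y.
Variable r : T.

Lemma ball0 : ball e 0 r = [set r]. Proof. by []. Qed.

Lemma in_ballS n y : (y \in ball e n.+1 r) = (y \in ball e n r) || [exists z in ball e n r, e z y].
Proof. by rewrite /= in_setU in_set. Qed.

Lemma ball_mono n m : n <= m -> ball e n r \subset ball e m r.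
Proof.
move=> /subnK <-; elim: (m - n) => [|i IH]; first by rewrite add0n.
apply: subset_trans IH _; apply/subsetP => y; rewrite addSn in_ballS => ->.
by [].
Qed.

Lemma path_ball p x n : x \in ball e n r -> path e x p -> last x p \in ball e (n + size p) r.
Proof.
elim: p x n => [|z p IH] x n /=; first by rewrite addn0.
move=> Hx /andP[exz Hp]; rewrite addnS -addSn; apply: IH Hp.
by rewrite in_ballS; apply/orP; right; apply/existsP; exists x; rewrite Hx.
Qed.

Lemma reach y : exists2 n, n < #|T| & y \in ball e n r.
Proof.
have /connectP[p Hp ->] := Hconn r y.
case: (shortenP Hp) => p' Hp' Hu _.
exists (size p'); last by rewrite -(add0n (size p')); apply: path_ball; rewrite ?ball0 ?in_set1.
have := max_card (mem (r :: p')); by rewrite (card_uniqP Hu).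
Qed.

Definition dd y := dist e r y.

Lemma dist_lt y : dd y < #|T|.
Proof.
have [n Hn Hb] := reach y.
rewrite /dd /dist -[X in _ < X](size_iota 0 #|T|) -has_find.
by apply/hasP; exists n; rewrite ?mem_iota.
Qed.

Lemma dist_ball y : y \in ball e (dd y) r.
Proof.
have Hl := dist_lt y.
have := @nth_find _ 0 (fun n => y \in ball e n r) (iota 0 #|T|).
rewrite -/(dist e r y) -/(dd y) nth_iota // add0n; apply.
by rewrite has_find size_iota.
Qed.

Lemma dist_min y n : y \in ball e n r -> dd y <= n.
Proof.
move=> Hb; case: (ltnP n #|T|) => Hn; last by apply: leq_trans (ltnW (dist_lt y)) Hn.
rewrite leqNgt; apply/negP => Hlt.
have := @before_find _ 0 (fun n => y \in ball e n r) (iota 0 #|T|) n.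
by rewrite -/(dist e r y) -/(dd y) nth_iota // add0n Hb => /(_ Hlt).
Qed.

Lemma dist_notin y n : n < dd y -> y \notin ball e n r.
Proof. by move=> H; apply/negP => /dist_min; rewrite leqNgt H. Qed.

Lemma dist0 y : (dd y == 0) = (y == r).
Proof.
apply/idP/idP => [/eqP H|/eqP->].
  by have := dist_ball y; rewrite H ball0 in_set1.
by rewrite -leqn0 dist_min // ball0 in_set1.
Qed.

Lemma dist_edge x y : e x y -> dd y <= (dd x).+1.
Proof.
move=> exy; apply: dist_min; rewrite in_ballS; apply/orP; right.
by apply/existsP; exists x; rewrite dist_ball.
Qed.

Lemma dist_pred y : y != r -> exists2 z, e z y & (dd z).+1 = dd y.
Proof.
rewrite -dist0 => Hy.
have Hb := dist_ball y; move: Hy Hb; case Ed: (dd y) => [|n] //= _.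
rewrite in_ballS (negbTE (dist_notin _)) ?Ed //= => /existsP[z /andP[Hz ez]].
exists z => //; apply/eqP; rewrite eqn_leq; apply/andP; split.
  by rewrite ltnS dist_min.
by rewrite -Ed dist_edge.
Qed.

End Dist.


Section Root.
Variable T : finType.
Variable e : rel T.
Hypothesis Htree : is_tree e.
Variable r : T.

Let Hsym : symmetric e. Proof. by case: Htree => [[]]. Qed.
Let Hirr : irreflexive e. Proof. by case: Htree => [[]]. Qed.
Let Hconn : forall x y, connect e x y. Proof. by case: Htree => _ []. Qed.
Let Hacyc : acyclic e. Proof. by case: Htree => _ []. Qed.

Local Notation dd := (dd e r).

Definition par x := if [pick z | e z x && ((dd z).+1 == dd x)] is Some z then z else r.

Lemma par_spec x : x != r -> e (par x) x /\ (dd (par x)).+1 = dd x.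
Proof.
move=> Hx; rewrite /par; case: pickP => [z /andP[-> /eqP->] //|H].
have [z ez Hz] := dist_pred Hconn Hx.
by move: (H z); rewrite ez Hz eqxx.
Qed.

Lemma par_r : par r = r.
Proof.
rewrite /par; case: pickP => [z /andP[_ /eqP]|] //.
by have /eqP -> : dd r == 0 by rewrite (dist0 Hconn).
Qed.

Lemma dd_par x : dd (par x) = (dd x).-1.
Proof.
case: (eqVneq x r) => [->|Hx]; first by rewrite par_r; have /eqP -> : dd r == 0 by rewrite (dist0 Hconn).
by have [_ <-] := par_spec Hx.
Qed.

Lemma dd_iter i x : dd (iter i par x) = dd x - i.
Proof. by elim: i => [|i IH]; rewrite ?subn0 //= dd_par IH subnS. Qed.

Lemma dd0 x : (dd x == 0) = (x == r).
Proof. exact: (dist0 Hconn). Qed.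

Lemma edge_par_of x : x != r -> e x (par x).
Proof. by move=> /par_spec[H _]; rewrite Hsym. Qed.

Lemma path_iter x m k : m + k <= dd x ->
  path e (iter m par x) [seq iter i par x | i <- iota m.+1 k].
Proof.
elim: k m => [|k IH] m //= Hk; apply/andP; split; last by apply: IH; rewrite addSnnS.
apply: edge_par_of; rewrite -dd0 dd_iter -lt0n subn_gt0.
by apply: leq_trans Hk; rewrite addnS ltnS leq_addr.
Qed.

Lemma last_iter x m k : last (iter m par x) [seq iter i par x | i <- iota m.+1 k] = iter (m + k) par x.
Proof. by elim: k m => [|k IH] m /=; rewrite ?addn0 // -/(iter m.+1 par x) IH addSnnS. Qed.

Lemma path_iter_rev x m k : m + k <= dd x ->
  path e (iter (m + k) par x) [seq iter i par x | i <- rev (iota m k)].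
Proof.
elim: k => [|k IH] // Hk.
rewrite -addn1 iotaD rev_cat /= addn1.
apply/andP; split; last by apply: IH; apply: leq_trans Hk; rewrite leq_add2l.
rewrite Hsym /= addnS; apply: edge_par_of; rewrite -dd0 dd_iter -lt0n subn_gt0.
by rewrite -addnS.
Qed.

Lemma no_cycle a b q : a != b -> dd a = dd b -> path e b (q ++ [:: a]) ->
  uniq q -> all (fun y => dd a < dd y) q -> False.
Proof.
move=> Hab Hd Hp Hq Hqd.
have Hex : exists i, iter i par a == iter i par b.
  exists (dd a); apply/eqP.
  have /eqP -> : iter (dd a) par a == r by rewrite -dd0 dd_iter subnn.
  by apply/eqP; rewrite eq_sym -dd0 dd_iter Hd subnn.
pose n := ex_minn Hex.
have [Hn Hmin] : iter n par a = iter n par b /\ forall i, iter i par a == iter i par b -> n <= i.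
  by rewrite /n; case: ex_minnP => m /eqP Hm Hm'; split.
have Hna : n <= dd a.
  apply: Hmin; have /eqP -> : iter (dd a) par a == r by rewrite -dd0 dd_iter subnn.
  by rewrite eq_sym -dd0 dd_iter Hd subnn.
have Hn0 : 0 < n.
  by rewrite lt0n; apply/negP => /eqP Hn0; move: Hn; rewrite Hn0 /=; apply/eqP.
pose LA := [seq iter i par a | i <- iota 0 n.+1].
pose LB := [seq iter i par b | i <- iota 0 n].
have HLA : forall y, y \in LA -> exists2 i, i <= n & y = iter i par a.
  by move=> y /mapP[i]; rewrite mem_iota add0n ltnS => Hi ->; exists i.
have HLB : forall y, y \in LB -> exists2 i, i < n & y = iter i par b.
  by move=> y /mapP[i]; rewrite mem_iota add0n => Hi ->; exists i.
have Hu : uniq (LA ++ rev LB ++ q).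
  rewrite cat_uniq [uniq (rev LB ++ q)]cat_uniq rev_uniq Hq andbT; apply/and4P; split.
  + rewrite map_inj_in_uniq ?iota_uniq // => i j; rewrite !mem_iota !add0n !ltnS => Hi Hj Hij.
    have := congr1 dd Hij; rewrite !dd_iter; lia.
  + apply/hasPn => y Hy; apply/negP => /HLA[i Hi Hy']; move: Hy; rewrite mem_cat mem_rev => /orP[/HLB[j Hj Hij]|].
      rewrite Hij in Hy'; move: Hy'; clear Hij => Hij.
      have := congr1 dd Hij; rewrite !dd_iter -Hd => Hij'.
      have Eij : i = j by lia.
      move: Hij; rewrite Eij => /eqP; rewrite eq_sym => /Hmin; lia.
    move=> Hyq; move: Hy' => Hy; move: Hqd => /allP /(_ y Hyq); rewrite Hy dd_iter; lia.
  + rewrite map_inj_in_uniq ?iota_uniq // => i j; rewrite !mem_iota !add0n => Hi Hj Hij.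
    have := congr1 dd Hij; rewrite !dd_iter; lia.
  + apply/hasPn => y Hyq; apply/negP; rewrite mem_rev => /HLB[i Hi Hy]; move: Hqd => /allP /(_ y Hyq).
    rewrite Hy dd_iter; lia.
have Hs : 2 < size (LA ++ rev LB ++ q).
  rewrite !size_cat size_rev !size_map !size_iota; lia.
suff Hc : cycle e (LA ++ rev LB ++ q) by move: (Hacyc Hu Hs); rewrite Hc.
rewrite /LA /= rcons_cat cat_path; apply/andP; split; first exact: (path_iter (m:=0)).
rewrite (last_iter a 0 n) add0n Hn rcons_cat cat_path; apply/andP; split.
  rewrite /LB -map_rev; have := @path_iter_rev b 0 n; rewrite add0n; apply; lia.
have -> : last (iter n par b) (rev LB) = b.
  rewrite /LB -map_rev; clear -Hn0; case: n Hn0 => // n' _.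
  by rewrite /= rev_cons map_rcons last_rcons.
by rewrite -cats1.
Qed.


Lemma edge_par x y : e x y -> (y == par x) || (x == par y).
Proof.
move=> exy.
have H1 := dist_edge Hconn r exy.
have H2 : dd x <= (dd y).+1 by apply: (dist_edge Hconn); rewrite Hsym.
have [Hlt|Hgt|Heq] := ltngtP (dd x) (dd y).
- have Hy : y != r by rewrite -dd0 -lt0n (leq_ltn_trans _ Hlt).
  have [ez Hz] := par_spec Hy.
  case: (eqVneq x (par y)) => [Ex|Hne]; first by rewrite Ex; apply/orP; right.
  exfalso; apply: (no_cycle (a := x) (b := par y) (q := [:: y])) => //.
  + lia.
  + by rewrite /= ez Hsym exy.
  + by rewrite /= andbT; lia.
- have Hx : x != r by rewrite -dd0 -lt0n (leq_ltn_trans _ Hgt).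
  have [ez Hz] := par_spec Hx.
  case: (eqVneq y (par x)) => [Ey|Hne]; first by rewrite Ey; apply/orP; left.
  exfalso; apply: (no_cycle (a := y) (b := par x) (q := [:: x])) => //.
  + lia.
  + by rewrite /= ez exy.
  + by rewrite /= andbT; lia.
- exfalso; apply: (no_cycle (a := x) (b := y) (q := [::])) => //.
  + by apply/eqP => Exy; move: exy; rewrite Exy Hirr.
  + by rewrite /= Hsym exy.
Qed.

End Root.


Section Count.
Variables X Y : finType.

Lemma card_sum (A : {set X}) (b : pred X) : #|[set x in A | b x]| = \sum_(x in A) (b x : nat).
Proof.
rewrite -sum1dep_card big_mkcondr /=; apply: eq_bigr => x _; by case: (b x).
Qed.

Lemma sum_one (I : {set Y}) (f : pred Y) y0 : y0 \in I -> f y0 ->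
  (forall y, y \in I -> f y -> y = y0) -> \sum_(y in I) (f y : nat) = 1%N.
Proof.
move=> H0 H1 H2; rewrite (bigD1 y0) //= H1 big1 // => y /andP[Hy Hne].
by case Hf: (f y) => //; move: Hne; rewrite (H2 y Hy Hf) eqxx.
Qed.

Lemma card_partition_sum (A : {set X}) (I : {set Y}) (f : Y -> pred X) :
  (forall x, x \in A -> \sum_(y in I) (f y x : nat) = 1%N) ->
  #|A| = \sum_(y in I) #|[set x in A | f y x]|.
Proof.
move=> H; rewrite -sum1_card (eq_bigr (fun x => \sum_(y in I) (f y x : nat))); last first.
  by move=> x Hx; rewrite H.
rewrite exchange_big /=; apply: eq_bigr => y _; by rewrite card_sum.
Qed.
End Count.

Section Comb.
Variable T : finType.
Variable e : rel T.
Variables (o : T) (k : nat) (K J : {set T}) (v0 : T).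
Hypothesis Hk : 0 < k.
Hypothesis Htree : is_tree e.
Hypothesis Hvalid : valid e k o.
Hypothesis HKJ : K :|: J = even_vertices e o.
Hypothesis HKJ0 : K :&: J = set0.
Hypothesis Hv0 : v0 \in J.

Let Hsym : symmetric e. Proof. by case: Htree => [[]]. Qed.
Let Hirr : irreflexive e. Proof. by case: Htree => [[]]. Qed.
Let Hconn : forall x y, connect e x y. Proof. by case: Htree => _ []. Qed.

Local Notation d := (dd e v0).
Local Notation p := (par e v0).

Lemma d_par x : d (p x) = (d x).-1. Proof. exact: dd_par. Qed.
Lemma d0 x : (d x == 0) = (x == v0). Proof. exact: dd0. Qed.
Lemma p_v0 : p v0 = v0. Proof. exact: par_r. Qed.
Lemma e_par x : x != v0 -> e x (p x).
Proof. by move=> Hx; apply: edge_par_of. Qed.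
Lemma d_parS x : x != v0 -> d x = (d (p x)).+1.
Proof. by rewrite -d0 d_par; case: (d x). Qed.
Lemma e_cases x y : e x y -> (y == p x) || (x == p y).
Proof. exact: edge_par. Qed.

Lemma e_d x y : e x y -> (d y == (d x).+1) || (d x == (d y).+1).
Proof.
move=> exy; case/orP: (e_cases exy) => /eqP Hp.
- have Hx : x != v0 by apply/eqP => Ex; move: exy; rewrite Hp Ex p_v0 Hirr.
  by rewrite Hp (d_parS Hx) eqxx orbT.
- have Hy : y != v0 by apply/eqP => Ey; move: exy; rewrite Hp Ey p_v0 Hirr.
  by rewrite Hp (d_parS Hy) eqxx.
Qed.

Lemma e_odd x y : e x y -> odd (d x) = ~~ odd (d y).
Proof. by move=> /e_d /orP[] /eqP ->; rewrite /= ?negbK. Qed.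

Lemma height_edge x y : e x y -> odd (height e o x) = ~~ odd (height e o y).
Proof.
move=> exy; rewrite /height -!/(dd e o _).
case/orP: (edge_par Htree o exy) => /eqP Hp.
- have Hx : x != o by apply/eqP => Ex; move: exy; rewrite Hp Ex par_r // Hirr.
  have [_ <-] := par_spec Htree Hx; by rewrite Hp /= ?negbK.
- have Hy : y != o by apply/eqP => Ey; move: exy; rewrite Hp Ey par_r // Hirr.
  have [_ <-] := par_spec Htree Hy; by rewrite Hp /= negbK.
Qed.

Lemma v0_even : ~~ odd (height e o v0).
Proof.
have : v0 \in even_vertices e o by rewrite -HKJ in_setU Hv0 orbT.
by rewrite in_set.
Qed.

Lemma odd_height x : odd (height e o x) = odd (d x).
Proof.
move Hn : (d x) => n; elim: n x Hn => [|n IH] x Hn.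
  by move/eqP: Hn; rewrite d0 => /eqP ->; rewrite (negbTE v0_even).
have Hx : x != v0 by rewrite -d0 Hn.
rewrite (height_edge (e_par Hx)) (IH (p x)) //.
by rewrite d_par Hn.
Qed.

Lemma in_odd x : (x \in odd_vertices e o) = odd (d x).
Proof. by rewrite in_set odd_height. Qed.
Lemma in_even x : (x \in even_vertices e o) = ~~ odd (d x).
Proof. by rewrite in_set odd_height. Qed.

Lemma J_even x : x \in J -> ~~ odd (d x).
Proof. by move=> Hx; rewrite -in_even -HKJ in_setU Hx orbT. Qed.
Lemma K_even x : x \in K -> ~~ odd (d x).
Proof. by move=> Hx; rewrite -in_even -HKJ in_setU Hx. Qed.
Lemma even_KJ x : ~~ odd (d x) -> x \notin K -> x \in J.
Proof. by rewrite -in_even -HKJ in_setU => /orP[->|]. Qed.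

Lemma odd_ne_v0 x : odd (d x) -> x != v0.
Proof. by apply: contraL => /eqP ->; have /eqP -> : d v0 == 0 by rewrite d0. Qed.

Definition anc x y := iter (d y - d x) p y == x.

Lemma d_iter i x : d (iter i p x) = d x - i. Proof. exact: dd_iter. Qed.

Lemma anc_refl y : anc y y. Proof. by rewrite /anc subnn. Qed.

Lemma anc_d x y : anc x y -> d x <= d y.
Proof.
rewrite /anc => /eqP H; have := congr1 d H; rewrite d_iter; lia.
Qed.

Lemma anc_par x y : anc x y -> x != y -> anc x (p y).
Proof.
rewrite /anc => /eqP H Hne; have Hd := congr1 d H; rewrite d_iter in Hd.
have Hlt : d x < d y.
  rewrite ltn_neqAle; apply/andP; split; last by rewrite -Hd leq_subr.
  apply/eqP => Exy; move: H; rewrite Exy subnn /= => Ey; by rewrite Ey eqxx in Hne.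
have Hy : y != v0 by rewrite -d0; lia.
rewrite d_par; apply/eqP; rewrite -iterSr.
have -> : ((d y).-1 - d x).+1 = d y - d x by lia.
exact: H.
Qed.

Lemma anc_par_inv x y : anc x (p y) -> anc x y.
Proof.
case: (eqVneq y v0) => [->|Hy]; first by rewrite p_v0.
rewrite /anc d_par => /eqP H; have := congr1 d H; rewrite d_iter d_par => Hd.
have Hle : d x <= (d y).-1.
  by apply/negP => /negP; rewrite -ltnNge => Hl; move: Hd; lia.
have Hy0 : 0 < d y by rewrite lt0n d0.
have Hlt : d x < d y by rewrite (leq_ltn_trans Hle) // ltn_predL.
apply/eqP; rewrite -[X in _ = X]H -iterSr; congr iter.
move: Hle Hy0 Hlt; clear; lia.
Qed.

Lemma anc_trans x y z : anc x y -> anc y z -> anc x z.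
Proof.
move=> Hxy Hyz; have Hd1 := anc_d Hxy; have Hd2 := anc_d Hyz.
move: Hxy Hyz; rewrite /anc => /eqP H1 /eqP H2.
have -> : d z - d x = (d y - d x) + (d z - d y) by lia.
by rewrite iterD H2 H1.
Qed.

Lemma anc_eq x x' y : anc x y -> anc x' y -> d x = d x' -> x = x'.
Proof. by rewrite /anc => /eqP H1 /eqP H2 Hd; rewrite -H1 -H2 Hd. Qed.

Lemma anc_iter i y : anc (iter i p y) y.
Proof.
rewrite /anc d_iter; case: (leqP i (d y)) => Hi.
  by have -> : d y - (d y - i) = i by lia.
have -> : d y - (d y - i) = d y by lia.
apply/eqP; have /eqP -> : iter (d y) p y == v0 by rewrite -d0 d_iter subnn.
elim: i Hi => [//|i IH] Hi; rewrite iterS.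
case: (eqVneq (d y) i) => [Ei|Hne].
  have /eqP -> : iter i p y == v0 by rewrite -d0 d_iter Ei subnn.
  by rewrite p_v0.
by rewrite -IH ?p_v0 //; lia.
Qed.

Lemma anc_v0 y : anc v0 y.
Proof.
have /eqP <- : iter (d y) p y == v0 by rewrite -d0 d_iter subnn.
exact: anc_iter.
Qed.

Lemma anc_child y w : anc y w -> y != w -> exists c, [/\ anc c w, p c = y & d c = (d y).+1].
Proof.
move=> Hyw Hne; have Hd := anc_d Hyw.
have Hlt : d y < d w.
  rewrite ltn_neqAle Hd andbT; apply/eqP => Ed.
  by move: Hne; rewrite (anc_eq Hyw (anc_refl w) Ed) eqxx.
exists (iter (d w - d y).-1 p w); split; first exact: anc_iter; last by rewrite d_iter; lia.
move: Hyw; rewrite /anc => /eqP H.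
rewrite -iterS; have -> : ((d w - d y).-1).+1 = d w - d y by lia.
exact: H.
Qed.

Lemma anc_self_par x : anc (p x) x.
Proof. exact: (anc_iter 1). Qed.

Lemma anc_d_eq x y : anc x y -> d x = d y -> x = y.
Proof. by move=> H Hd; apply: anc_eq H (anc_refl y) Hd. Qed.

Lemma anc_cases x y : anc x y -> (x == y) || anc x (p y).
Proof. by case: (eqVneq x y) => // Hne H; rewrite (anc_par H Hne). Qed.


Lemma m_edge (M : {set T * T}) x y : is_matching e M -> (x, y) \in M -> e x y.
Proof. by move=> /andP[/forallP /(_ (x, y)) /implyP H _] /H /andP[]. Qed.
Lemma m_sym (M : {set T * T}) x y : is_matching e M -> (x, y) \in M -> (y, x) \in M.
Proof. by move=> /andP[/forallP /(_ (x, y)) /implyP H _] /H /andP[]. Qed.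
Lemma m_uniq (M : {set T * T}) x y z : is_matching e M -> (x, y) \in M -> (x, z) \in M -> y = z.
Proof.
move=> /andP[_ /forallP /(_ x) /forallP /(_ y) /forallP /(_ z) /implyP H] H1 H2.
by apply/eqP; apply: H; rewrite H1 H2.
Qed.
Lemma m_uniqr (M : {set T * T}) x y z : is_matching e M -> (y, x) \in M -> (z, x) \in M -> y = z.
Proof. by move=> HM H1 H2; apply: (m_uniq HM (m_sym HM H1) (m_sym HM H2)). Qed.
Lemma is_matchingP (M : {set T * T}) :
  (forall x y, (x, y) \in M -> e x y) -> (forall x y, (x, y) \in M -> (y, x) \in M) ->
  (forall x y z, (x, y) \in M -> (x, z) \in M -> y = z) -> is_matching e M.
Proof.
move=> H1 H2 H3; apply/andP; split.
  by apply/forallP => [[x y]]; apply/implyP => /= Hq; rewrite H1 // H2.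
apply/forallP => x; apply/forallP => y; apply/forallP => z; apply/implyP => /andP[Hy Hz].
by rewrite (H3 _ _ _ Hy Hz).
Qed.
Lemma satP (M : {set T * T}) x : reflect (exists y, (x, y) \in M) (saturates M x).
Proof. exact: existsP. Qed.

Definition U := odd_vertices e o.
Definition Good := [set M : {set T * T} | is_matching e M && [forall x in K :|: U, saturates M x]].
Definition Good0 := [set M in Good | ~~ saturates M v0].

Lemma GoodP (M : {set T * T}) : reflect (is_matching e M /\ forall x, x \in K :|: U -> saturates M x) (M \in Good).
Proof.
rewrite in_set; apply: (iffP andP) => [[H1 /forallP H2]|[H1 H2]]; split => //.
  by move=> x Hx; move: (H2 x); rewrite Hx.
by apply/forallP => x; apply/implyP; apply: H2.
Qed.

Lemma m_count_Good : m_count e o K = #|Good|. Proof. by []. Qed.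

Lemma m_count_split : (m_count e o (v0 |: K) + #|Good0| = m_count e o K)%N.
Proof.
rewrite m_count_Good -(cardsID [set M | saturates M v0] Good); congr (_ + _)%N.
  apply: eq_card => M; rewrite !in_set; apply/andP/andP => [[Hm /forallP H]|[/andP[Hm /forallP H] Hs]].
    split; last by move: (H v0); rewrite !in_setU in_set1 eqxx.
    rewrite Hm; apply/forallP => x; apply/implyP => Hx; move: (H x); rewrite !in_setU in_set1.
    by move: Hx; rewrite in_setU => /orP[]-> ; rewrite ?orbT.
  split => //; apply/forallP => x; apply/implyP; rewrite !in_setU in_set1 -orbA => /orP[/eqP->//|Hx].
  by move: (H x); rewrite in_setU Hx.
by apply: eq_card => M; rewrite !in_set andbC.
Qed.

Definition alt (M : {set T * T}) v := [forall x, (anc x v && ~~ odd (d x) && (x != v0)) ==> ((p x, x) \in M)].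
Definition altr (M : {set T * T}) v := [forall x, (anc x v && ~~ odd (d x) && (x != v0)) ==> ((p x, p (p x)) \in M)].

Lemma altP (M : {set T * T}) v : reflect (forall x, anc x v -> ~~ odd (d x) -> x != v0 -> (p x, x) \in M) (alt M v).
Proof.
apply: (iffP forallP) => H x.
  by move=> H1 H2 H3; move: (H x); rewrite H1 H2 H3.
by apply/implyP => /andP[/andP[H1 H2] H3]; apply: H.
Qed.
Lemma altrP (M : {set T * T}) v : reflect (forall x, anc x v -> ~~ odd (d x) -> x != v0 -> (p x, p (p x)) \in M) (altr M v).
Proof.
apply: (iffP forallP) => H x.
  by move=> H1 H2 H3; move: (H x); rewrite H1 H2 H3.
by apply/implyP => /andP[/andP[H1 H2] H3]; apply: H.
Qed.

Definition Pset v := [set q : T * T | (anc q.1 v && (q.1 != v0) && (q.2 == p q.1)) ||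
                                       (anc q.2 v && (q.2 != v0) && (q.1 == p q.2))].
Definition flip v (M : {set T * T}) := (M :\: Pset v) :|: (Pset v :\: M).

Lemma in_flip v M q : (q \in flip v M) = (q \in M) (+) (q \in Pset v).
Proof. by rewrite !in_setU !in_setD; case: (q \in M); case: (q \in Pset v). Qed.

Lemma flipK v (M : {set T * T}) : flip v (flip v M) = M.
Proof. by apply/setP => q; rewrite !in_flip -addbA addbb addbF. Qed.

Lemma in_P v y a : ((y, a) \in Pset v) =
  (anc y v && (y != v0) && (a == p y)) || (anc a v && (a != v0) && (y == p a)).
Proof. by rewrite in_set. Qed.

Lemma P_sym v y a : ((y, a) \in Pset v) = ((a, y) \in Pset v).
Proof. by rewrite !in_P orbC. Qed.

Lemma P_anc v y a : (y, a) \in Pset v -> anc y v.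
Proof.
rewrite in_P => /orP[/andP[/andP[->//]]|/andP[/andP[Ha _] /eqP ->]].
exact: anc_trans (anc_self_par a) Ha.
Qed.

Lemma P_edge v y a : (y, a) \in Pset v -> e y a.
Proof.
rewrite in_P => /orP[/andP[/andP[_ Hy] /eqP ->]|/andP[/andP[_ Ha] /eqP ->]]; first exact: e_par.
by rewrite Hsym; apply: e_par.
Qed.

Lemma P_self v x : anc x v -> x != v0 -> (x, p x) \in Pset v.
Proof. by move=> H1 H2; rewrite in_P H1 H2 eqxx. Qed.

Lemma child_odd c : c != v0 -> odd (d c) = ~~ odd (d (p c)).
Proof. by move=> Hc; rewrite (d_parS Hc) /=. Qed.

Section FlipGen.
Variables (v : T) (M : {set T * T}) (b : bool).
Hypothesis HM : is_matching e M.
Hypothesis Hpath : forall x, anc x v -> x != v0 -> ((x, p x) \in M) = (odd (d x) == b).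
Hypothesis Hon : forall y a, anc y v -> (y, a) \in M -> (y, a) \in Pset v.

Lemma PnotM y a : (y, a) \in Pset v -> (y, a) \notin M ->
  (anc y v && (y != v0) && (a == p y) && (odd (d y) != b)) ||
  (anc a v && (a != v0) && (y == p a) && (odd (d a) != b)).
Proof.
rewrite in_P => /orP[/andP[/andP[H1 H2] /eqP H3]|/andP[/andP[H1 H2] /eqP H3]] HnM.
  by rewrite H1 H2 H3 eqxx /= -(Hpath H1 H2) -H3 HnM.
apply/orP; right; rewrite H1 H2 H3 eqxx /= -(Hpath H1 H2).
by apply: contra HnM => Hin; rewrite H3 (m_sym HM Hin).
Qed.

Lemma flip_matching : is_matching e (flip v M).
Proof.
apply: is_matchingP.
- move=> x y; rewrite in_flip; case Hx: ((x, y) \in M) => /=; first by move=> _; exact: m_edge HM Hx.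
  by apply: P_edge.
- move=> x y; rewrite !in_flip P_sym.
  case Hx: ((x, y) \in M); first by rewrite (m_sym HM Hx).
  case Hy: ((y, x) \in M) => //; by rewrite (m_sym HM Hy) in Hx.
- move=> y a c; rewrite !in_flip.
  case Ha: ((y, a) \in M); case Hc: ((y, c) \in M) => //=.
  + by move=> _ _; exact: m_uniq HM Ha Hc.
  + by move=> Hna HPc; move: Hna; rewrite (Hon (P_anc HPc) Ha).
  + by move=> HPa Hnc; move: Hnc; rewrite (Hon (P_anc HPa) Hc).
  + move=> HPa HPc.
    move: (PnotM HPa (negbT Ha)) (PnotM HPc (negbT Hc)).
    case/orP => /andP[/andP[/andP[Ha1 Ha2] /eqP Ha3] Ha4]; case/orP => /andP[/andP[/andP[Hc1 Hc2] /eqP Hc3] Hc4].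
    * by rewrite Ha3 Hc3.
    * by move: Ha4 Hc4; rewrite Hc3 (child_odd Hc2); case: (odd (d (p c))); case: b.
    * by move: Ha4 Hc4; rewrite Ha3 (child_odd Ha2); case: (odd (d (p a))); case: b.
    * apply: anc_eq Ha1 Hc1 _; rewrite (d_parS Ha2) (d_parS Hc2) -Ha3 -Hc3 //.
Qed.

Lemma flip_off y a : ~~ anc y v -> ((y, a) \in flip v M) = ((y, a) \in M).
Proof.
move=> Hy; rewrite in_flip; case HP: ((y, a) \in Pset v); last by rewrite addbF.
by move: Hy; rewrite (P_anc HP).
Qed.

Lemma flip_sat_off y : ~~ anc y v -> saturates M y -> saturates (flip v M) y.
Proof. by move=> Hy /satP[a Ha]; apply/satP; exists a; rewrite flip_off. Qed.

Lemma flip_path x : anc x v -> x != v0 -> ((x, p x) \in flip v M) = (odd (d x) != b).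
Proof. by move=> H1 H2; rewrite in_flip (P_self H1 H2) addbT (Hpath H1 H2). Qed.

Lemma flip_sat_on x : anc x v ->
  ((odd (d x) != b) && (x != v0)) || ((odd (d x) == b) && (x != v)) -> saturates (flip v M) x.
Proof.
move=> Hx /orP[/andP[H1 H2]|/andP[H1 H2]]; apply/satP.
  by exists (p x); rewrite flip_path.
have [c [Hc1 Hc2 Hc3]] := anc_child Hx H2.
have Hc0 : c != v0 by rewrite -d0 Hc3.
exists c; rewrite -Hc2 in_flip P_sym (P_self Hc1 Hc0) addbT.
have Hn : (c, p c) \notin M by rewrite (Hpath Hc1 Hc0) (child_odd Hc0) Hc2 (eqP H1); case: b.
by apply: contra Hn => Hin; exact: m_sym HM Hin.
Qed.

End FlipGen.


Definition Nset v := [set M in Good0 | alt M v].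
Definition Rset v := [set M in Good | altr M v && ~~ saturates M v].

Lemma d_child c : c != v0 -> d c = (d (p c)).+1. Proof. exact: d_parS. Qed.

Lemma gp_ne x : x != v0 -> ~~ odd (d x) -> p (p x) != x.
Proof.
move=> Hx He; apply/eqP => E; have := congr1 d E; rewrite !d_par.
have : 0 < d x by rewrite lt0n d0.
by move: He; case: (d x) => [|[|n]] //=; lia.
Qed.

Section Dir.
Variable v : T.
Hypothesis Hv : v \in J.

Let v_even : ~~ odd (d v). Proof. exact: J_even. Qed.

Lemma odd_ne_v x : odd (d x) -> x != v.
Proof. by apply: contraL => /eqP ->. Qed.

Lemma K_ne_v x : x \in K -> x != v.
Proof.
move=> Hx; apply/eqP => E; have : x \in K :&: J by rewrite in_setI Hx E Hv.
by rewrite HKJ0 in_set0.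
Qed.

Lemma KU_cases x : x \in K :|: U -> (odd (d x)) || ((x \in K) && ~~ odd (d x)).
Proof.
rewrite in_setU /U in_odd => /orP[Hx|->]; last by [].
by rewrite (K_even Hx) Hx orbT.
Qed.

Lemma N_path (M : {set T * T}) : M \in Good0 -> alt M v ->
  forall x, anc x v -> x != v0 -> ((x, p x) \in M) = (odd (d x) == false).
Proof.
rewrite in_set => /andP[/GoodP[HM _] _] /altP Ha x Hx Hx0.
case Ho: (odd (d x)) => /=.
  have [c [Hc1 Hc2 Hc3]] := anc_child Hx (odd_ne_v Ho).
  have Hc0 : c != v0 by rewrite -d0 Hc3.
  have Hce : ~~ odd (d c) by rewrite Hc3 /= Ho.
  have := Ha c Hc1 Hce Hc0; rewrite Hc2 => Hxc.
  apply/negP => Hxp; have Ec := m_uniq HM Hxc Hxp.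
  by move: Hc3; rewrite Ec d_par; lia.
by apply: (m_sym HM); apply: Ha => //; rewrite Ho.
Qed.

Lemma N_on (M : {set T * T}) : M \in Good0 -> alt M v ->
  forall y a, anc y v -> (y, a) \in M -> (y, a) \in Pset v.
Proof.
move=> HG Ha y a Hy Hya; have HG' := HG; move: HG'; rewrite in_set => /andP[/GoodP[HM _] Hns].
case: (eqVneq y v0) => [Ey|Hy0].
  by move: Hns; rewrite -Ey => /satP []; exists a.
case Ho: (odd (d y)).
  have [c [Hc1 Hc2 Hc3]] := anc_child Hy (odd_ne_v Ho).
  have Hc0 : c != v0 by rewrite -d0 Hc3.
  have := N_path HG Ha Hc1 Hc0; rewrite Hc3 /= Ho /= Hc2 => Hyc.
  rewrite -(m_uniq HM (m_sym HM Hyc) Hya) P_sym -Hc2; exact: P_self.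
have := N_path HG Ha Hy Hy0; rewrite Ho /= => Hyp.
by rewrite (m_uniq HM Hya Hyp); exact: P_self.
Qed.

Lemma N_to_R (M : {set T * T}) : M \in Nset v -> flip v M \in Rset v.
Proof.
rewrite in_set => /andP[HG Ha].
have HG' := HG; move: HG'; rewrite in_set => /andP[/GoodP[HM Hsat] Hns].
have Hp := N_path HG Ha; have Ho := N_on HG Ha.
have HF := flip_matching HM Hp Ho.
rewrite in_set; apply/andP; split; last apply/andP; last split.
- apply/GoodP; split => // x Hx.
  case Hxv: (anc x v); last by apply: flip_sat_off; rewrite ?Hxv // Hsat.
  apply: (flip_sat_on HM Hp Hxv).
  case/orP: (KU_cases Hx) => [Hod|/andP[HK He]].
    by rewrite Hod odd_ne_v0.
  by rewrite (negbTE He) K_ne_v // orbT.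
- apply/altrP => x Hx He Hx0.
  have Hpo : odd (d (p x)) by move: He; rewrite (child_odd Hx0) negbK.
  have Hpx : p x != v0 by rewrite odd_ne_v0.
  rewrite (flip_path Hp _ Hpx); first by rewrite Hpo.
  exact: anc_trans (anc_self_par x) Hx.
- apply/satP => [[a]]; rewrite in_flip.
  case Hva: ((v, a) \in M); first by rewrite (Ho _ _ (anc_refl v) Hva).
  move=> /= HP; case/orP: (PnotM HM Hp HP (negbT Hva)) => /andP[/andP[/andP[H1 H2] /eqP H3] H4].
    by move: H4; rewrite (negbTE v_even).
  by move: (anc_d H1); rewrite H3 (d_child H2); lia.
Qed.

Lemma R_path (M : {set T * T}) : M \in Good -> altr M v -> ~~ saturates M v ->
  forall x, anc x v -> x != v0 -> ((x, p x) \in M) = (odd (d x) == true).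
Proof.
move=> /GoodP[HM _] /altrP Ha Hns x Hx Hx0.
case Ho: (odd (d x)) => /=.
  have [c [Hc1 Hc2 Hc3]] := anc_child Hx (odd_ne_v Ho).
  have Hc0 : c != v0 by rewrite -d0 Hc3.
  have Hce : ~~ odd (d c) by rewrite Hc3 /= Ho.
  by have := Ha c Hc1 Hce Hc0; rewrite Hc2.
have Hxe : ~~ odd (d x) by rewrite Ho.
have Hpp := Ha x Hx Hxe Hx0.
apply/negP => Hxp; have E := m_uniq HM (m_sym HM Hxp) Hpp.
by move: (gp_ne Hx0 Hxe); rewrite -E eqxx.
Qed.

Lemma R_on (M : {set T * T}) : M \in Good -> altr M v -> ~~ saturates M v ->
  forall y a, anc y v -> (y, a) \in M -> (y, a) \in Pset v.
Proof.
move=> HG Ha Hns y a Hy Hya; have HG' := HG; move: HG' => /GoodP[HM _].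
case: (eqVneq y v) => [Ey|Hyv].
  by move: Hns; rewrite -Ey => /satP []; exists a.
case Ho: (odd (d y)).
  have Hy0 := odd_ne_v0 Ho.
  have := R_path HG Ha Hns Hy Hy0; rewrite Ho eqxx => Hyp.
  by rewrite (m_uniq HM Hya Hyp); exact: P_self.
have [c [Hc1 Hc2 Hc3]] := anc_child Hy Hyv.
have Hc0 : c != v0 by rewrite -d0 Hc3.
have := R_path HG Ha Hns Hc1 Hc0; rewrite Hc3 /= Ho /= Hc2 => Hyc.
rewrite -(m_uniq HM (m_sym HM Hyc) Hya) P_sym -Hc2; exact: P_self.
Qed.

Lemma R_to_N (M : {set T * T}) : M \in Rset v -> flip v M \in Nset v.
Proof.
rewrite in_set => /andP[HG /andP[Ha Hns]].
have HG' := HG; move: HG' => /GoodP[HM Hsat].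
have Hp := R_path HG Ha Hns; have Ho := R_on HG Ha Hns.
have HF := flip_matching HM Hp Ho.
rewrite in_set; apply/andP; split; first (rewrite in_set; apply/andP; split).
- apply/GoodP; split => // x Hx.
  case Hxv: (anc x v); last by apply: flip_sat_off; rewrite ?Hxv // Hsat.
  apply: (flip_sat_on HM Hp Hxv).
  case/orP: (KU_cases Hx) => [Hod|/andP[HK He]].
    by rewrite Hod odd_ne_v // orbT.
  rewrite (negbTE He) /=; apply/orP; left; apply/eqP => E; have : x \in K :&: J.
    by rewrite in_setI HK E Hv0.
  by rewrite HKJ0 in_set0.
- apply/satP => [[a]]; rewrite in_flip.
  case Hva: ((v0, a) \in M); first by rewrite (Ho _ _ (anc_v0 v) Hva).
  move=> /= HP; case/orP: (PnotM HM Hp HP (negbT Hva)) => /andP[/andP[/andP[H1 H2] /eqP H3] H4].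
    by rewrite eqxx in H2.
  move: H4; rewrite (d_child H2) -H3.
  by have /eqP -> : d v0 == 0 by rewrite d0.
- apply/altP => x Hx He Hx0.
  apply: (m_sym HF); rewrite (flip_path Hp Hx Hx0).
  by rewrite (negbTE He).
Qed.

Lemma card_NR : #|Nset v| = #|Rset v|.
Proof.
have Hinj : injective (flip v) by apply: (can_inj (flipK v)).
apply/eqP; rewrite eqn_leq; apply/andP; split.
  rewrite -(card_imset _ Hinj); apply: subset_leq_card; apply/subsetP => M /imsetP[M' HM' ->].
  exact: N_to_R.
rewrite -(card_imset _ Hinj); apply: subset_leq_card; apply/subsetP => M /imsetP[M' HM' ->].
exact: R_to_N.
Qed.

End Dir.


Lemma anc_c x c : c != v0 -> anc x c = (x == c) || anc x (p c).
Proof.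
move=> Hc; apply/idP/idP => [H|/orP[/eqP->|H]]; first exact: anc_cases.
  exact: anc_refl.
exact: anc_par_inv.
Qed.

Lemma alt_odd (M : {set T * T}) u : odd (d u) -> alt M u = alt M (p u).
Proof.
move=> Hu; have Hu0 := odd_ne_v0 Hu.
apply/altP/altP => H x Hx He Hx0.
  by apply: H => //; apply: anc_par_inv.
apply: H => //; move: Hx; rewrite anc_c // => /orP[/eqP Ex|//].
by move: He; rewrite Ex Hu.
Qed.

Lemma alt_child (M : {set T * T}) c : c != v0 -> ~~ odd (d c) ->
  alt M c = alt M (p c) && ((p c, c) \in M).
Proof.
move=> Hc He; apply/altP/andP => [H|[/altP H1 H2] x].
  split; last exact: H (anc_refl c) He Hc.
  by apply/altP => x Hx; apply: H; apply: anc_par_inv.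
rewrite anc_c // => /orP[/eqP->//|Hx]; exact: H1.
Qed.

Lemma N_split u : odd (d u) ->
  #|Nset (p u)| = \sum_(c in [set c | p c == u]) #|Nset c|.
Proof.
move=> Hu; have Hu0 := odd_ne_v0 Hu.
rewrite (card_partition_sum (I := [set c | p c == u]) (f := fun c (M : {set T * T}) => (u, c) \in M)).
  apply: eq_bigr => c; rewrite in_set => /eqP Hc.
  have Hc0 : c != v0 by apply/eqP => E; move: Hu0; rewrite -Hc E p_v0 eqxx.
  have He : ~~ odd (d c) by rewrite (child_odd Hc0) Hc Hu.
  apply: eq_card => M; rewrite !in_set (alt_child _ Hc0 He) Hc (alt_odd _ Hu).
  by rewrite andbA.
move=> M; rewrite in_set => /andP[]; rewrite in_set => /andP[/GoodP[HM Hsat] Hns] Ha.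
have : u \in K :|: U by rewrite in_setU /U in_odd Hu orbT.
move=> /Hsat /satP[y Huy].
have Hy : p y = u.
  case/orP: (e_cases (m_edge HM Huy)) => /eqP E; last by rewrite E.
  exfalso; case: (eqVneq (p u) v0) => [Ep|Hp0].
    by move: Hns => /satP; apply; exists u; rewrite -Ep -E (m_sym HM Huy).
  have Hpe : ~~ odd (d (p u)) by rewrite -(negbK (odd (d (p u)))) -(child_odd Hu0) Hu.
  have H1 := (altP _ _ Ha) (p u) (anc_refl _) Hpe Hp0.
  have H2 : (p u, u) \in M by rewrite -E (m_sym HM Huy).
  have E2 := m_uniq HM (m_sym HM H1) H2.
  by move: (congr1 d E2); rewrite !d_par; move: (d_parS Hu0); rewrite d_par; lia.
apply: (sum_one (y0 := y)); first by rewrite in_set Hy.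
  by [].
move=> c; rewrite in_set => _ Huc; exact: m_uniq HM Huc Huy.
Qed.


Lemma exists_max (P : pred T) : P v0 -> exists2 x, P x & forall y, P y -> d y <= d x.
Proof. by move=> H; case: (arg_maxnP d H) => x Px Hm; exists x. Qed.

Lemma altr_odd (M : {set T * T}) u : odd (d u) -> altr M u = altr M (p u).
Proof.
move=> Hu; have Hu0 := odd_ne_v0 Hu.
apply/altrP/altrP => H x Hx He Hx0.
  by apply: H => //; apply: anc_par_inv.
apply: H => //; move: Hx; rewrite anc_c // => /orP[/eqP Ex|//].
by move: He; rewrite Ex Hu.
Qed.

Lemma altr_child (M : {set T * T}) c : c != v0 -> ~~ odd (d c) ->
  altr M c = altr M (p c) && ((p c, p (p c)) \in M).
Proof.
move=> Hc He; apply/altrP/andP => [H|[/altrP H1 H2] x].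
  split; last exact: H (anc_refl c) He Hc.
  by apply/altrP => x Hx; apply: H; apply: anc_par_inv.
rewrite anc_c // => /orP[/eqP->//|Hx]; exact: H1.
Qed.

Lemma anc_v0_eq x : anc x v0 -> x = v0.
Proof.
move=> H; apply/eqP; rewrite -d0 -leqn0; have := anc_d H.
by have /eqP -> : d v0 == 0 by rewrite d0.
Qed.

Lemma alt_v0 (M : {set T * T}) : alt M v0.
Proof. by apply/altP => x /anc_v0_eq ->; rewrite eqxx. Qed.
Lemma altr_v0 (M : {set T * T}) : altr M v0.
Proof. by apply/altrP => x /anc_v0_eq ->; rewrite eqxx. Qed.

Lemma matched_child (M : {set T * T}) v u : is_matching e M -> altr M v -> ~~ odd (d v) ->
  (v, u) \in M -> p u = v /\ u != v0.
Proof.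
move=> HM /altrP Ha He Hvu; have Hev := m_edge HM Hvu.
case/orP: (e_cases Hev) => /eqP E.
  exfalso; case: (eqVneq v v0) => [Ev|Hv0'].
    by move: Hev; rewrite E Ev p_v0 Hirr.
  have H1 := Ha v (anc_refl v) He Hv0'.
  have H2 : (p v, v) \in M by rewrite -E (m_sym HM Hvu).
  by move: (gp_ne Hv0' He); rewrite (m_uniq HM H1 H2) eqxx.
split; first by rewrite E.
by apply/eqP => Eu; move: Hev; rewrite E Eu p_v0 Hirr.
Qed.

Lemma S_anc (M M2 : {set T * T}) x z : alt M2 x -> altr M x -> anc z x -> alt M2 z && altr M z.
Proof.
move=> /altP H1 /altrP H2 Hz; apply/andP; split.
  by apply/altP => y Hy; apply: H1; exact: anc_trans Hy Hz.
by apply/altrP => y Hy; apply: H2; exact: anc_trans Hy Hz.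
Qed.

Lemma Rset_even v (M : {set T * T}) : M \in Rset v -> ~~ odd (d v).
Proof.
rewrite in_set => /andP[/GoodP[_ Hs] /andP[_ Hn]]; apply/negP => Ho.
by move: Hn; rewrite Hs // in_setU /U in_odd Ho orbT.
Qed.

Lemma Rset_J v (M : {set T * T}) : M \in Rset v -> v \in J.
Proof.
move=> HR; apply: even_KJ; first exact: Rset_even HR.
move: HR; rewrite in_set => /andP[/GoodP[_ Hs] /andP[_ Hn]]; apply/negP => HK.
by move: Hn; rewrite Hs // in_setU HK.
Qed.

Lemma pair_exists (M M2 : {set T * T}) : M \in Good -> M2 \in Good0 ->
  exists v, [/\ v \in J, M \in Rset v & M2 \in Nset v].
Proof.
move=> HG HG0; have HG' := HG; move: HG' => /GoodP[HM Hsat].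
have HG0' := HG0; move: HG0'; rewrite in_set => /andP[/GoodP[HM2 Hsat2] Hns2].
pose P := fun x => ~~ odd (d x) && alt M2 x && altr M x.
have HP0 : P v0 by rewrite /P alt_v0 altr_v0 andbT; have /eqP -> : d v0 == 0 by rewrite d0.
have [v /andP[/andP[Hve Ha2] Har] Hmax] := exists_max HP0.
have Hns : ~~ saturates M v.
  apply/satP => [[u Hvu]].
  have [Hpu Hu0] := matched_child HM Har Hve Hvu.
  have Hu : odd (d u) by rewrite child_odd // Hpu.
  have : u \in K :|: U by rewrite in_setU /U in_odd Hu orbT.
  move=> /Hsat2 /satP[c Huc].
  have Hc : p c = u.
    case/orP: (e_cases (m_edge HM2 Huc)) => /eqP E; last by rewrite E.
    exfalso; rewrite Hpu in E; case: (eqVneq v v0) => [Ev|Hv0'].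
      by move: Hns2 => /satP; apply; exists u; rewrite -Ev -E (m_sym HM2 Huc).
    have H1 := (altP _ _ Ha2) v (anc_refl v) Hve Hv0'.
    have H2 : (v, u) \in M2 by rewrite -E (m_sym HM2 Huc).
    have := m_uniq HM2 (m_sym HM2 H1) H2 => Epu.
    by move: (gp_ne Hv0' Hve); rewrite Epu Hpu eqxx.
  have Hc0 : c != v0 by apply/eqP => Ec; move: Hu; rewrite -Hc Ec p_v0; have /eqP -> : d v0 == 0 by rewrite d0.
  have Hce : ~~ odd (d c) by rewrite child_odd // Hc Hu.
  have : P c.
    rewrite /P Hce (alt_child _ Hc0 Hce) (altr_child _ Hc0 Hce) Hc (alt_odd _ Hu) (altr_odd _ Hu) Hpu.
    rewrite Ha2 Har Huc /=; exact: (m_sym HM Hvu).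
  by move=> /Hmax; rewrite (d_child Hc0) Hc (d_child Hu0) Hpu ltnNge leqnSn.
have HR : M \in Rset v by rewrite in_set HG Har Hns.
exists v; split => //; first exact: Rset_J HR.
by rewrite in_set HG0 Ha2.
Qed.

Lemma same_depth (M M2 : {set T * T}) : is_matching e M -> is_matching e M2 ->
  forall n x y, ~~ odd (d x) -> alt M2 x -> altr M x -> ~~ odd (d y) -> alt M2 y -> altr M y ->
  d x = n -> d y = n -> x = y.
Proof.
move=> HM HM2; elim/ltn_ind => n IH x y Hxe Hxa Hxr Hye Hya Hyr Hx Hy.
case: (eqVneq x v0) => [Ex|Hx0].
  by rewrite Ex; apply/eqP; rewrite eq_sym -d0 Hy -Hx Ex d0.
have Hy0 : y != v0 by rewrite -d0 Hy -Hx d0.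
have Hpx : odd (d (p x)) by move: Hxe; rewrite (child_odd Hx0) negbK.
have Hpy : odd (d (p y)) by move: Hye; rewrite (child_odd Hy0) negbK.
have Hpx0 := odd_ne_v0 Hpx; have Hpy0 := odd_ne_v0 Hpy.
have Hgx : ~~ odd (d (p (p x))) by rewrite -(child_odd Hpx0).
have Hgy : ~~ odd (d (p (p y))) by rewrite -(child_odd Hpy0).
have /andP[Hgxa Hgxr] := S_anc Hxa Hxr (anc_iter 2 x).
have /andP[Hgya Hgyr] := S_anc Hya Hyr (anc_iter 2 y).
have Eg : p (p x) = p (p y).
  apply: (IH (d (p (p x)))) => //.
  - have Hx1 : 0 < d x by rewrite lt0n d0.
    by rewrite !d_par -Hx; case: (d x) Hx1 => // n' _; rewrite /= ltnS leq_pred.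
  - by rewrite !d_par Hy -Hx.
have H1 := (altrP _ _ Hxr) x (anc_refl x) Hxe Hx0.
have H2 := (altrP _ _ Hyr) y (anc_refl y) Hye Hy0.
rewrite Eg in H1; have Ep := m_uniqr HM H1 H2.
have H3 := (altP _ _ Hxa) x (anc_refl x) Hxe Hx0.
have H4 := (altP _ _ Hya) y (anc_refl y) Hye Hy0.
by rewrite Ep in H3; exact: m_uniq HM2 H3 H4.
Qed.

Lemma pair_unique_le (M M2 : {set T * T}) v w :
  M \in Rset v -> M2 \in Nset v -> M \in Rset w -> M2 \in Nset w -> d v <= d w -> v = w.
Proof.
move=> HRv HNv HRw HNw Hle.
have Hve := Rset_even HRv; have Hwe := Rset_even HRw.
move: HRv; rewrite in_set => /andP[/GoodP[HM _] /andP[Hvr Hvn]].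
move: HNv; rewrite in_set => /andP[]; rewrite in_set => /andP[/GoodP[HM2 _] _] Hva.
move: HRw; rewrite in_set => /andP[_ /andP[Hwr Hwn]].
move: HNw; rewrite in_set => /andP[_ Hwa].
pose w' := iter (d w - d v) p w.
have Hw'w : anc w' w by apply: anc_iter.
have Hdw' : d w' = d v by rewrite d_iter subKn.
have /andP[Hw'a Hw'r] := S_anc Hwa Hwr Hw'w.
have Ew : w' = v.
  apply: (same_depth HM HM2 (n := d v)) => //.
  by rewrite Hdw'.
rewrite Ew in Hw'w.
case: (eqVneq v w) => // Hne; exfalso.
have [c1 [Hc1 Hc1p Hc1d]] := anc_child Hw'w Hne.
have Hc1o : odd (d c1) by rewrite Hc1d /= Hve.
have Hc1w : c1 != w by apply/eqP => E; move: Hc1o; rewrite E (negbTE Hwe).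
have [c2 [Hc2 Hc2p Hc2d]] := anc_child Hc1 Hc1w.
have Hc20 : c2 != v0 by rewrite -d0 Hc2d.
have Hc2e : ~~ odd (d c2) by rewrite Hc2d /= Hc1o.
have := (altrP _ _ Hwr) c2 Hc2 Hc2e Hc20; rewrite Hc2p Hc1p => H.
by move: Hvn => /satP; apply; exists c1; exact: m_sym HM H.
Qed.

Lemma pair_unique (M M2 : {set T * T}) v w :
  M \in Rset v -> M2 \in Nset v -> M \in Rset w -> M2 \in Nset w -> v = w.
Proof.
move=> H1 H2 H3 H4; case: (leqP (d v) (d w)) => H.
  exact: (pair_unique_le H1 H2 H3 H4 H).
by apply/esym; apply: (pair_unique_le H3 H4 H1 H2 (ltnW H)).
Qed.


Lemma pair_count : (#|Good| * #|Good0| = \sum_(v in J) #|Nset v| ^ 2)%N.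
Proof.
rewrite -cardsX (card_partition_sum (I := J)
  (f := fun v (q : {set T * T} * {set T * T}) => (q.1 \in Rset v) && (q.2 \in Nset v))).
  apply: eq_bigr => v Hv; rewrite expnS expn1 {1}(card_NR Hv) -cardsX.
  apply: eq_card => [[M M2]]; rewrite in_set !in_setX /=.
  case HR: (M \in Rset v); case HN: (M2 \in Nset v); rewrite ?andbF ?andbT //=.
  have H1 : M \in Good by move: HR; rewrite in_set => /andP[].
  have H2 : M2 \in Good0 by move: HN; rewrite in_set => /andP[].
  by rewrite H1 H2.
move=> [M M2]; rewrite in_setX => /andP[HG HG0].
have [v [Hv HR HN]] := pair_exists HG HG0.
apply: (sum_one (y0 := v)) => //=; first by rewrite HR HN.
by move=> w _ /andP[HR' HN']; apply: (pair_unique HR' HN' HR HN).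
Qed.

Lemma Good0_pos : (0 < #|Good| -> 0 < #|Good0|)%N.
Proof.
rewrite !card_gt0 => /set0Pn[M HG]; have HG' := HG; move: HG' => /GoodP[HM Hsat].
pose P := fun x => ~~ odd (d x) && altr M x.
have HP0 : P v0 by rewrite /P altr_v0 andbT; have /eqP -> : d v0 == 0 by rewrite d0.
have [v /andP[Hve Har] Hmax] := exists_max HP0.
have Hns : ~~ saturates M v.
  apply/satP => [[u Hvu]].
  have [Hpu Hu0] := matched_child HM Har Hve Hvu.
  have Hu : odd (d u) by rewrite child_odd // Hpu.
  have Hdeg : degree e u = k.+1 by case: Hvalid => _; apply; rewrite in_odd.
  have : (0 < #|[set w | e u w] :\ p u|)%N.
    move: Hdeg; rewrite /degree (cardsD1 (p u)); case: (p u \in _) => /= H.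
      by rewrite add1n in H; case: H => ->.
    by rewrite add0n in H; rewrite H.
  rewrite card_gt0 => /set0Pn[c]; rewrite in_setD1 in_set => /andP[Hcp Huc].
  have Hc : p c = u.
    case/orP: (e_cases Huc) => /eqP E; last by rewrite E.
    by move: Hcp; rewrite E eqxx.
  have Hc0 : c != v0.
    apply/eqP => Ec; move: Hu; rewrite -Hc Ec p_v0.
    by have /eqP -> : d v0 == 0 by rewrite d0.
  have Hce : ~~ odd (d c) by rewrite child_odd // Hc Hu.
  have : P c.
    rewrite /P Hce (altr_child _ Hc0 Hce) Hc (altr_odd _ Hu) Hpu Har /=.
    exact: (m_sym HM Hvu).
  by move=> /Hmax; rewrite (d_child Hc0) Hc (d_child Hu0) Hpu ltnNge leqnSn.
have HR : M \in Rset v by rewrite in_set HG Har Hns.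
apply/set0Pn; exists (flip v M).
by have := R_to_N (Rset_J HR) HR; rewrite in_set => /andP[].
Qed.

End Comb.


Import Order.TTheory GRing.Theory Num.Theory.
Local Open Scope ring_scope.
Section Main.
Variable R : realType.
Variable T : finType.
Variable e : rel T.
Variables (o : T) (k : nat) (K J : {set T}) (v0 : T).
Variable D : T -> T -> R.
Hypothesis Hk : (0 < k)%N.
Hypothesis Htree : is_tree e.
Hypothesis Hvalid : valid e k o.
Hypothesis HKJ : K :|: J = even_vertices e o.
Hypothesis HKJ0 : K :&: J = set0.
Hypothesis Hv0 : v0 \in J.
Hypothesis HD : forall v u, v \in even_vertices e o -> u \in odd_vertices e o ->
     if e v u then (D v u = 1 \/ D v u = -1) else D v u = 0.

Let Hsym : symmetric e. Proof. by case: Htree => [[]]. Qed.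

Local Notation d := (dd e v0).
Local Notation p := (par e v0).

Fixpoint sgn (n : nat) (x : T) : R :=
  if n is n'.+1 then (if x == v0 then 1 else - sgn n' (p (p x)) * D (p (p x)) (p x) * D x (p x))
  else 1.

Lemma d0' x : (d x == 0)%N = (x == v0). Proof. exact: (d0 v0 Htree). Qed.

Lemma sgn_v0 n : sgn n v0 = 1. Proof. by case: n => //= n; rewrite eqxx. Qed.

Lemma sgn_fuel n m x : (d x <= n)%N -> (d x <= m)%N -> sgn n x = sgn m x.
Proof.
elim: n m x => [|n IH] m x Hn Hm.
  by move: Hn; rewrite leqn0 d0' => /eqP ->; rewrite !sgn_v0.
case: m Hm => [|m] Hm.
  by move: Hm; rewrite leqn0 d0' => /eqP ->; rewrite !sgn_v0.
rewrite /=; case: (eqVneq x v0) => // Hx; congr (- _ * _ * _).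
have Hx1 := d_child Htree Hx.
apply: IH; rewrite !(d_par v0 Htree); move: Hn Hm; rewrite Hx1; case: (d (p x)) => //= j; lia.
Qed.

Definition s x := sgn #|T| x.

Lemma s_v0 : s v0 = 1. Proof. exact: sgn_v0. Qed.

Lemma s_rec x : x != v0 -> s x = - s (p (p x)) * D (p (p x)) (p x) * D x (p x).
Proof.
move=> Hx; rewrite /s.
have Hlt := dist_lt (Htree.2.1) v0 x.
case E: #|T| Hlt => [//|n] Hlt; rewrite [sgn n.+1 x]/= (negbTE Hx); congr (- _ * _ * _).
apply: sgn_fuel; rewrite !(d_par v0 Htree); lia.
Qed.


Lemma D_sq v u : ~~ odd (d v) -> odd (d u) -> e v u -> D v u ^+ 2 = 1.
Proof.
move=> Hv Hu Hvu; have := HD (v := v) (u := u).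
rewrite (in_even Htree HKJ Hv0) (in_odd Htree HKJ Hv0) Hv Hu Hvu => /(_ isT isT).
by case=> ->; rewrite ?expr1n // sqrrN expr1n.
Qed.

Lemma s_sq x : ~~ odd (d x) -> s x ^+ 2 = 1.
Proof.
move Hn : (d x) => n; elim/ltn_ind: n x Hn => n IH x Hn He; rewrite -Hn in He.
case: (eqVneq x v0) => [->|Hx]; first by rewrite s_v0 expr1n.
have Hpx : odd (d (p x)) by move: He; rewrite (child_odd Htree Hx) negbK.
have Hpx0 := odd_ne_v0 Htree Hpx.
have Hgx : ~~ odd (d (p (p x))) by rewrite -(child_odd Htree Hpx0).
rewrite s_rec // !exprMn sqrrN (IH (d (p (p x)))) //; last first.
  rewrite -Hn !(d_par v0 Htree); have : (0 < d x)%N by rewrite lt0n d0'.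
  by case: (d x) => // j _; rewrite /= ltnS leq_pred.
have E1 : e x (p x) by exact: (e_par Htree Hx).
have E2 : e (p (p x)) (p x) by rewrite Hsym; exact: (e_par Htree Hpx0).
by rewrite (D_sq Hgx Hpx E2) (D_sq He Hpx E1) !mulr1.
Qed.


Definition Z : R := (#|Good0 e o K v0|)%:R.
Definition phi v : R := s v * (#|Nset e o K v0 v|)%:R / Z.

Lemma Gpos : (0 < #|Good e o K|)%N -> Z != 0.
Proof.
move=> H; rewrite /Z pnatr_eq0 -lt0n.
exact: (Good0_pos Hk Htree Hvalid HKJ HKJ0 Hv0 H).
Qed.

Lemma Nset_v0 : Nset e o K v0 v0 = Good0 e o K v0.
Proof. by apply/setP => M; rewrite [in LHS]in_set (alt_v0 Hk Htree Hv0) andbT. Qed.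

Lemma phi_v0 : (0 < #|Good e o K|)%N -> phi v0 = 1.
Proof. by move=> H; rewrite /phi s_v0 Nset_v0 mul1r -/Z divff // Gpos. Qed.

Lemma phi_sum : (0 < #|Good e o K|)%N ->
  \sum_(v in J) phi v ^+ 2 = (#|Good e o K|)%:R / Z.
Proof.
move=> H; have HZ := Gpos H.
rewrite (eq_bigr (fun v => (#|Nset e o K v0 v| ^ 2)%:R / Z ^+ 2)); last first.
  move=> v Hv; rewrite /phi !exprMn (s_sq (J_even Htree HKJ Hv0 Hv)) mul1r exprVn.
  by rewrite natrX.
rewrite -mulr_suml -natr_sum -(pair_count Hk Htree HKJ HKJ0 Hv0) natrM -/Z.
by rewrite expr2 invfM mulrA -(mulrA _ Z) divff // mulr1.
Qed.


Lemma phi_constraint u : u \in odd_vertices e o ->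
  \sum_(v in even_vertices e o) phi v * D v u = 0.
Proof.
rewrite (in_odd Htree HKJ Hv0) => Hu.
have Hu0 := odd_ne_v0 Htree Hu.
pose q := p u.
have Hqe : ~~ odd (d q) by rewrite -(child_odd Htree Hu0).
have Hd1 : d u = (d q).+1 by exact: (d_child Htree Hu0).
have Hpq : p q != u.
  apply/eqP => E; have := congr1 d E; rewrite (d_par v0 Htree) -/q Hd1 /=.
  by case: (d q) => [|j] //= /eqP; rewrite ?ltn_eqF // eq_sym neq_ltn ltnSn.
rewrite big_mkcond (eq_bigr (fun v => (if v == q then phi q * D q u else 0) +
   (if p v == u then phi v * D v u else 0))); last first.
  move=> v _; case: (eqVneq v q) => [->|Hvq].
    by rewrite (in_even Htree HKJ Hv0) Hqe (negbTE Hpq) addr0.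
  rewrite add0r; case: (eqVneq (p v) u) => [Hpv|Hpv].
    have Hv0' : v != v0 by apply/eqP => E; move: Hu0; rewrite -Hpv E (p_v0 v0 Htree) eqxx.
    by rewrite (in_even Htree HKJ Hv0) (child_odd Htree Hv0') Hpv Hu.
  case: ifP => // Hve.
  have := HD Hve (u := u); rewrite (in_odd Htree HKJ Hv0) Hu => /(_ isT).
  case Hvu: (e v u); last by move=> ->; rewrite mulr0.
  by case/orP: (e_cases v0 Htree Hvu) => /eqP E; [move: Hpv; rewrite E eqxx | move: Hvq; rewrite E eqxx].
rewrite big_split /= -big_mkcond big_pred1_eq -big_mkcond /=.
rewrite (eq_bigr (fun c => - (s q * D q u / Z) * (#|Nset e o K v0 c|)%:R)); last first.
  move=> c /eqP Hc.
  have Hc0 : c != v0 by apply/eqP => E; move: Hu0; rewrite -Hc E (p_v0 v0 Htree) eqxx.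
  have Hce : ~~ odd (d c) by rewrite (child_odd Htree Hc0) Hc Hu.
  have Hsq : D c u ^+ 2 = 1 by apply: D_sq => //; rewrite -Hc; exact: (e_par Htree Hc0).
  rewrite /phi (s_rec Hc0) Hc -/q.
  have -> : - (s q * D q u / Z) * (#|Nset e o K v0 c|)%:R =
            - (s q * D q u / Z) * (#|Nset e o K v0 c|)%:R * D c u ^+ 2 by rewrite Hsq mulr1.
  ring.
rewrite -mulr_sumr -natr_sum.
have -> : (\sum_(c | p c == u) #|Nset e o K v0 c|)%N = #|Nset e o K v0 q|.
  rewrite (N_split Hk Htree HKJ Hv0 Hu); apply: eq_bigl => c; by rewrite in_set.
rewrite /phi; ring.
Qed.

End Main.

Unset Implicit Arguments.

Theorem claim2p11 (R : realType) (T : finType) (e : rel T) (o : T) (k : nat)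
  (D : T -> T -> R) (K J : {set T}) (v0 : T) :
  (1 <= k)%N ->
  is_tree e -> valid e k o ->
  (forall v u, v \in even_vertices e o -> u \in odd_vertices e o ->
     if e v u then (D v u = 1 \/ D v u = -1) else D v u = 0) ->
  K :|: J = even_vertices e o -> K :&: J = set0 ->
  (0 < m_count e o K)%N ->
  v0 \in J ->
  exists phi : T -> R,
    (forall u, u \in odd_vertices e o ->
       \sum_(v in even_vertices e o) phi v * D v u = 0) /\
    phi v0 = 1 /\
    \sum_(v in J) phi v ^+ 2 =
      (m_count e o K)%:R / ((m_count e o K)%:R - (m_count e o (v0 |: K))%:R).
Proof.
move=> Hk Htree Hvalid HD HKJ HKJ0 Hm Hv0.
exists (phi e o K v0 D); split; last split.
- by move=> u Hu; apply: (phi_constraint Hk Htree HKJ Hv0 HD Hu).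
- exact: (phi_v0 D Hk Htree Hvalid HKJ HKJ0 Hv0 Hm).
- have E : (m_count e o K)%:R - (m_count e o (v0 |: K))%:R = Z R e o K v0 :> R.
    by rewrite -(m_count_split e o K v0) natrD addrAC subrr add0r.
  by rewrite E (phi_sum Hk Htree Hvalid HKJ HKJ0 Hv0 HD Hm).
Qed.
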